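(* Let $(\Sigma,\omega_\Sigma)$ be a tropical fan in $N_\mathbb{R}$, let $f$ be a meromorphic function on $\Sigma$, let $\Delta$ be the tropical fan $\operatorname{div}(f)$, and let $\tilde\Sigma$ be the tropical modification of $\Sigma$ with respect to $f$. Then: (1) for each $\delta\in\Delta$, the star fan of $\tilde\Sigma$ at the cone $\Gamma_f(\delta)+\mathbb{R}_{\ge0}\tilde e$ is isomorphic to the star fan $\Delta^\delta$; (2) for each $\sigma\in\Sigma$, the star fan of $\tilde\Sigma$ at the cone $\Gamma_f(\sigma)$ is isomorphic to the tropical modification of $\Sigma^\sigma$ with respect to $f^\sigma$, the meromorphic function induced by $f$ on $\Sigma^\sigma$.
   Context: $N$ is a lattice, $M=\operatorname{Hom}(N,\mathbb{Z})$. A tropical fan $(\Sigma,\omega_\Sigma)$ of dimension $d$ is a rational fan with all maximal cones of dimension $d$ and weights satisfying the balancing condition. For $\sigma\in\Sigma$, $N_\sigma$ is the lattice generated by $\sigma\cap N$, $N^\sigma=N/N_\sigma$, and the star fan $\Sigma^\sigma$ is the tropical fan in $N^\sigma_\mathbb{R}$ formed by images of the cones containing $\sigma$, with induced weights. A meromorphic function $f$ on $\Sigma$ is a continuous function on $|\Sigma|$ which is integral linear on each cone. Its divisor $\Delta=\operatorname{div}(f)$ is the tropical fan of cones $\tau\in\Sigma_{d-1}$ with $\operatorname{ord}_\tau(f)\ne0$ and their faces, with weights $\operatorname{ord}_\tau(f)=-\sum_{\sigma\supset\tau}\omega_\Sigma(\sigma)f_\sigma(n_{\sigma/\tau})+f_\tau(\sum_{\sigma\supset\tau}\omega_\Sigma(\sigma)n_{\sigma/\tau})$,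 where $f_\sigma\in M$ agrees with $f$ on $\sigma$ and $n_{\sigma/\tau}\in N_\sigma$ satisfies $N_\tau+\mathbb{Z}n_{\sigma/\tau}=N_\sigma$, pointing into $\sigma$. The tropical modification $\tilde\Sigma$ is the fan in $N_\mathbb{R}\times\mathbb{R}$ with cones $\Gamma_f(\sigma)=\{(x,f(x)):x\in\sigma\}$, $\sigma\in\Sigma$, and $\Gamma_f(\delta)+\mathbb{R}_{\ge0}\tilde e$, $\delta\in\Delta$, where $\tilde e=(0,1)$; weights $\omega_\Sigma(\sigma)$ and $\omega_\Delta(\delta)$ respectively on maximal cones. For $\sigma\in\Sigma$, choose $\ell\in M$ coinciding with $f$ on $\sigma$; then $f-\ell$ vanishes on $\sigma$ and descends along the projection $N\to N^\sigma$ to a meromorphic function $f^\sigma$ on $\Sigma^\sigma$, well defined up to addition of an integral linear function on $N^\sigma$. *)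

(* Defs.v *)
From HB Require Import structures.
From mathcomp Require Import all_boot all_order all_algebra.
From mathcomp Require Import all_classical all_reals.
Set Implicit Arguments. Unset Strict Implicit. Unset Printing Implicit Defensive.
Import Order.TTheory GRing.Theory Num.Theory.
Local Open Scope classical_set_scope.
Local Open Scope ring_scope.

(* Conventions: the lattice N is Z^k sitting inside N_R = R^k ('rV[R]_k, row
   vectors); M = Hom(N,Z) is represented by integral column vectors m : 'cV_k,
   acting by x |-> (x *m m) 0 0.  Cones are subsets of R^k. *)

Section Fans.
Variable R : realType.

Definition intmx m k (A : 'M[R]_(m, k)) := forall i j, A i j \is a Num.int.

Definition lform k (m : 'cV[R]_k) (x : 'rV[R]_k) : R := (x *m m) 0 0.

Definition cone_gen k (s : seq 'rV[R]_k) : set 'rV[R]_k :=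
  [set x | exists c : 'I_(size s) -> R,
     (forall i, 0 <= c i) /\ x = \sum_(i < size s) c i *: s`_i].

Definition rcone k (C : set 'rV[R]_k) :=
  exists s : seq 'rV[R]_k, (forall i : 'I_(size s), intmx s`_i) /\ C = cone_gen s.

Definition pointed k (C : set 'rV[R]_k) := forall x, C x -> C (- x) -> x = 0.

Definition gens_mx k (s : seq 'rV[R]_k) : 'M[R]_(size s, k) :=
  \matrix_(i < size s) s`_i.
Definition has_dim k (C : set 'rV[R]_k) (r : nat) :=
  exists s : seq 'rV[R]_k, C = cone_gen s /\ \rank (gens_mx s) = r.

Definition face k (tau sigma : set 'rV[R]_k) :=
  exists u : 'cV[R]_k, (forall x, sigma x -> 0 <= lform u x) /\
    tau = [set x | sigma x /\ lform u x = 0].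

Definition facet k (tau sigma : set 'rV[R]_k) :=
  face tau sigma /\ exists r, has_dim tau r /\ has_dim sigma r.+1.

Definition fan k (S : set (set 'rV[R]_k)) :=
  [/\ finite_set S,
      (forall C, S C -> rcone C /\ pointed C),
      (forall C D, S C -> face D C -> S D) &
      (forall C D, S C -> S D -> face (C `&` D) C)].

Definition maxc k (S : set (set 'rV[R]_k)) (C : set 'rV[R]_k) :=
  S C /\ forall D, S D -> C `<=` D -> D = C.

Definition latt k (C : set 'rV[R]_k) (x : 'rV[R]_k) :=
  exists s : seq 'rV[R]_k, (forall i : 'I_(size s), C s`_i /\ intmx s`_i) /\
    exists c : 'I_(size s) -> int, x = \sum_(i < size s) s`_i *~ c i.

(* n_{sigma/tau}: N_tau + Z n = N_sigma, n pointing into sigma *)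
Definition nvec k (sigma tau : set 'rV[R]_k) (v : 'rV[R]_k) :=
  [/\ intmx v,
      (forall x, latt sigma x <-> exists y (m : int), latt tau y /\ x = y + v *~ m) &
      exists a b c, [/\ sigma a, tau b, tau c & v = a + b - c]].

Record wfan k := WFan { cones : set (set 'rV[R]_k); wt : set 'rV[R]_k -> int }.

(* cones of codimension one (Sigma_{d-1} for a pure fan) *)
Definition codim1 k (F : wfan k) (tau : set 'rV[R]_k) :=
  cones F tau /\ exists sigma, maxc (cones F) sigma /\ facet tau sigma.

Definition up k (F : wfan k) (tau : set 'rV[R]_k) :=
  [set sigma | maxc (cones F) sigma /\ tau `<=` sigma].

Definition balanced k (F : wfan k) :=
  forall tau, codim1 F tau ->
  forall nv : set 'rV[R]_k -> 'rV[R]_k,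
    (forall sigma, up F tau sigma -> nvec sigma tau (nv sigma)) ->
    latt tau (\sum_(sigma \in up F tau) nv sigma *~ wt F sigma).

Definition tropical_fan k (F : wfan k) (d : nat) :=
  [/\ fan (cones F),
      (forall C, maxc (cones F) C -> has_dim C d) &
      balanced F].

(* meromorphic function: integral linear on each cone (continuity on |Sigma|
   is then automatic) *)
Definition meromorphic k (F : wfan k) (f : 'rV[R]_k -> R) :=
  forall sigma, cones F sigma ->
    exists m : 'cV[R]_k, intmx m /\ forall x, sigma x -> f x = lform m x.

(* ord_tau(f); independent of the choices of n_{sigma/tau} and f_sigma *)
Definition ord k (F : wfan k) (f : 'rV[R]_k -> R) (tau : set 'rV[R]_k) : int :=
  xget 0%R [set z : int | exists (nv : set 'rV[R]_k -> 'rV[R]_k)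
                                (fm : set 'rV[R]_k -> 'cV[R]_k),
    [/\ (forall sigma, up F tau sigma -> nvec sigma tau (nv sigma)),
        (forall sigma, up F tau sigma \/ sigma = tau ->
           intmx (fm sigma) /\ forall x, sigma x -> f x = lform (fm sigma) x) &
        z%:~R = - (\sum_(sigma \in up F tau) (wt F sigma)%:~R * lform (fm sigma) (nv sigma))
                + lform (fm tau) (\sum_(sigma \in up F tau) nv sigma *~ wt F sigma)]].

Definition divf k (F : wfan k) (f : 'rV[R]_k -> R) : wfan k :=
  WFan [set delta | exists tau, [/\ codim1 F tau, ord F f tau != 0 & face delta tau]]
       (ord F f).

Definition graph k (f : 'rV[R]_k -> R) (C : set 'rV[R]_k) : set 'rV[R]_(k + 1) :=
  [set y | exists x, C x /\ y = row_mx x (f x)%:M].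
Definition graph_up k (f : 'rV[R]_k -> R) (C : set 'rV[R]_k) : set 'rV[R]_(k + 1) :=
  [set y | exists x t, [/\ C x, 0 <= t & y = row_mx x (f x + t)%:M]].

Definition modif k (F : wfan k) (f : 'rV[R]_k -> R) : wfan (k + 1) :=
  WFan ([set graph f sigma | sigma in cones F] `|`
        [set graph_up f delta | delta in cones (divf F f)])
       (fun C => \sum_(sigma \in [set sigma | cones F sigma /\ graph f sigma = C]) wt F sigma
               + \sum_(delta \in [set delta | cones (divf F f) delta /\ graph_up f delta = C])
                   wt (divf F f) delta).

Definition img k k' (A : 'M[R]_(k, k')) (C : set 'rV[R]_k) : set 'rV[R]_k' :=
  (fun x => x *m A) @` C.

(* p : N -> Z^k' realizes the quotient N -> N^sigma = N / N_sigma *)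
Definition qmap k k' (sigma : set 'rV[R]_k) (p : 'M[R]_(k, k')) :=
  [/\ intmx p,
      (forall y : 'rV[R]_k', intmx y -> exists x, intmx x /\ x *m p = y) &
      (forall x : 'rV[R]_k, intmx x -> (x *m p = 0 <-> latt sigma x))].

(* star fan at sigma, realized in N^sigma_R ~ R^k' via p *)
Definition star k k' (F : wfan k) (sigma : set 'rV[R]_k) (p : 'M[R]_(k, k')) : wfan k' :=
  WFan [set img p tau | tau in [set tau | cones F tau /\ sigma `<=` tau]]
       (fun C => \sum_(tau \in [set tau | [/\ cones F tau, sigma `<=` tau & img p tau = C]])
                   wt F tau).

Definition fan_iso k k' (F : wfan k) (G : wfan k') :=
  exists (A : 'M[R]_(k, k')) (B : 'M[R]_(k', k)),
    [/\ intmx A /\ intmx B, A *m B = 1%:M, B *m A = 1%:M,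
        cones G = [set img A C | C in cones F] &
        forall C, maxc (cones F) C -> wt G (img A C) = wt F C].

End Fans.

(* Main.v *)
Require Import Defs.
From HB Require Import structures.
From mathcomp Require Import all_boot all_order all_algebra.
From mathcomp Require Import all_classical all_reals.
From mathcomp Require Import zify lra.
Import Order.TTheory GRing.Theory Num.Theory.
Local Open Scope classical_set_scope.
Local Open Scope ring_scope.

Set Implicit Arguments. Unset Strict Implicit. Unset Printing Implicit Defensive.

Section H1.
Variable R : realType.

Lemma intmx_mul m k l (A : 'M[R]_(m,k)) (B : 'M[R]_(k,l)) :
  intmx A -> intmx B -> intmx (A *m B).
Proof. move=> hA hB i j; rewrite mxE rpred_sum // => r _; exact: rpredM. Qed.

Lemma intmxD m k (A B : 'M[R]_(m,k)) : intmx A -> intmx B -> intmx (A + B).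
Proof. by move=> hA hB i j; rewrite mxE rpredD. Qed.

Lemma intmxN m k (A : 'M[R]_(m,k)) : intmx A -> intmx (- A).
Proof. by move=> hA i j; rewrite mxE rpredN. Qed.

Lemma intmxB m k (A B : 'M[R]_(m,k)) : intmx A -> intmx B -> intmx (A - B).
Proof. by move=> hA hB; apply: intmxD => //; apply: intmxN. Qed.

Lemma intmx0 m k : intmx (0 : 'M[R]_(m,k)).
Proof. by move=> i j; rewrite mxE rpred0. Qed.

Lemma intmx_scalar m (a : R) : a \is a Num.int -> intmx (a%:M : 'M[R]_m).
Proof. by move=> ha i j; rewrite mxE; case: (i == j) => //=; rewrite ?mulr1n ?mulr0n ?rpred0. Qed.

Lemma intmx1 m : intmx (1%:M : 'M[R]_m).
Proof. by apply: intmx_scalar; rewrite rpred1. Qed.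

Lemma intmx_delta m k i j : intmx (delta_mx i j : 'M[R]_(m,k)).
Proof. by move=> a b; rewrite mxE; case: (_ && _) => /=; rewrite ?rpred0 ?rpred1. Qed.

Lemma intmxMz m k (A : 'M[R]_(m,k)) z : intmx A -> intmx (A *~ z).
Proof. by move=> hA i j; rewrite -scaler_int mxE mulrzl rpredMz. Qed.

Lemma intmx_row_mx m k1 k2 (A : 'M[R]_(m,k1)) (B : 'M[R]_(m,k2)) :
  intmx A -> intmx B -> intmx (row_mx A B).
Proof. by move=> hA hB i j; rewrite mxE; case: splitP. Qed.

Lemma intmx_col_mx m1 m2 k (A : 'M[R]_(m1,k)) (B : 'M[R]_(m2,k)) :
  intmx A -> intmx B -> intmx (col_mx A B).
Proof. by move=> hA hB i j; rewrite mxE; case: splitP. Qed.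

Lemma intmx_block m1 m2 k1 k2 (A : 'M[R]_(m1,k1)) (B : 'M[R]_(m1,k2))
  (C : 'M[R]_(m2,k1)) (D : 'M[R]_(m2,k2)) :
  intmx A -> intmx B -> intmx C -> intmx D -> intmx (block_mx A B C D).
Proof.
by move=> *; rewrite block_mxEv; apply: intmx_col_mx; apply: intmx_row_mx.
Qed.

Lemma intmx_row m k i (A : 'M[R]_(m,k)) : intmx A -> intmx (row i A).
Proof. by move=> hA a b; rewrite mxE. Qed.

Lemma lformD k (m : 'cV[R]_k) x y : lform m (x + y) = lform m x + lform m y.
Proof. by rewrite /lform mulmxDl mxE. Qed.

Lemma lformZ k (m : 'cV[R]_k) a x : lform m (a *: x) = a * lform m x.
Proof. by rewrite /lform -scalemxAl mxE. Qed.

Lemma lformN k (m : 'cV[R]_k) x : lform m (- x) = - lform m x.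
Proof. by rewrite /lform mulNmx mxE. Qed.

Lemma lformB k (m : 'cV[R]_k) x y : lform m (x - y) = lform m x - lform m y.
Proof. by rewrite lformD lformN. Qed.

Lemma lform0 k (m : 'cV[R]_k) : lform m 0 = 0.
Proof. by rewrite /lform mul0mx mxE. Qed.

Lemma lformMz k (m : 'cV[R]_k) x z : lform m (x *~ z) = lform m x *~ z.
Proof. by rewrite /lform -[x *~ z]scaler_int -scalemxAl mxE mulrzl. Qed.

Lemma lform_sum k (m : 'cV[R]_k) I (r : seq I) (P : pred I) (F : I -> 'rV_k) :
  lform m (\sum_(i <- r | P i) F i) = \sum_(i <- r | P i) lform m (F i).
Proof.
elim/big_rec2: _ => [|i a b _ <-]; first by rewrite lform0.
by rewrite lformD.
Qed.

Lemma lform_int k (m : 'cV[R]_k) x : intmx m -> intmx x -> lform m x \is a Num.int.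
Proof. by move=> hm hx; exact: intmx_mul. Qed.

Lemma lformE k (m : 'cV[R]_k) x : x *m m = (lform m x)%:M.
Proof. exact: mx11_scalar. Qed.

Lemma gens_row k (s : seq 'rV[R]_k) i : row i (gens_mx s) = s`_i.
Proof. by rewrite rowK. Qed.

Lemma mul_gens k (s : seq 'rV[R]_k) (w : 'rV_(size s)) :
  w *m gens_mx s = \sum_(i < size s) w 0 i *: s`_i.
Proof. by rewrite mulmx_sum_row; apply: eq_bigr => i _; rewrite gens_row. Qed.

Lemma cone0 k (s : seq 'rV[R]_k) : cone_gen s 0.
Proof. exists (fun=> 0); split=> [i|] //; by rewrite big1 // => i _; rewrite scale0r. Qed.

Lemma cone_pt k (s : seq 'rV[R]_k) (i : 'I_(size s)) : cone_gen s s`_i.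
Proof.
exists (fun j => (j == i)%:R); split=> [j|]; first by case: (j == i).
rewrite (bigD1 i) //= eqxx scale1r big1 ?addr0 // => j /negbTE ->.
by rewrite scale0r.
Qed.

Lemma cone_add k (s : seq 'rV[R]_k) a b :
  cone_gen s a -> cone_gen s b -> cone_gen s (a + b).
Proof.
move=> [c [c0 ->]] [c' [c0' ->]]; exists (fun i => c i + c' i); split.
  by move=> i; rewrite addr_ge0.
by rewrite -big_split; apply: eq_bigr => i _; rewrite scalerDl.
Qed.

Lemma cone_scale k (s : seq 'rV[R]_k) a x :
  0 <= a -> cone_gen s x -> cone_gen s (a *: x).
Proof.
move=> a0 [c [c0 ->]]; exists (fun i => a * c i); split.
  by move=> i; rewrite mulr_ge0.
by rewrite scaler_sumr; apply: eq_bigr => i _; rewrite scalerA.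
Qed.

Lemma cone_sub k (s : seq 'rV[R]_k) x : cone_gen s x -> (x <= gens_mx s)%MS.
Proof.
move=> [c [_ ->]]; apply: summx_sub => i _; apply: scalemx_sub.
by rewrite -gens_row row_sub.
Qed.

Lemma span_split k (s : seq 'rV[R]_k) x : (x <= gens_mx s)%MS ->
  exists a b, [/\ cone_gen s a, cone_gen s b & x = a - b].
Proof.
move=> /submxP [w ->]; rewrite mul_gens.
exists (\sum_(i < size s) Num.max (w 0 i) 0 *: s`_i).
exists (\sum_(i < size s) Num.max (- w 0 i) 0 *: s`_i); split.
- by exists (fun i => Num.max (w 0 i) 0); split=> // i; rewrite le_max lexx orbT.
- by exists (fun i => Num.max (- w 0 i) 0); split=> // i; rewrite le_max lexx orbT.
rewrite -sumrB; apply: eq_bigr => i _; rewrite -scalerBl; congr (_ *: _).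
case: (leP (w 0 i) 0) => h.
  by rewrite (max_l (_ : 0 <= - w 0 i)) ?oppr_ge0 // sub0r opprK.
by rewrite (max_r (_ : - w 0 i <= 0)) ?subr0 // oppr_le0 ltW.
Qed.

Lemma span_ker k l (s : seq 'rV[R]_k) (p : 'M[R]_(k, l)) (x : 'rV[R]_k) :
  (forall i : 'I_(size s), s`_i *m p = 0) -> (x <= gens_mx s)%MS -> x *m p = 0.
Proof.
move=> h /submxP [w ->]; rewrite -mulmxA.
suff -> : gens_mx s *m p = 0 by rewrite mulmx0.
by apply/row_matrixP => i; rewrite row_mul gens_row h row0.
Qed.

Lemma cone_eq_submx k (s1 s2 : seq 'rV[R]_k) :
  cone_gen s1 `<=` cone_gen s2 -> (gens_mx s1 <= gens_mx s2)%MS.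
Proof.
move=> h; apply/row_subP => i; rewrite gens_row; apply: cone_sub; apply: h.
exact: cone_pt.
Qed.

Lemma cone_rank k (s1 s2 : seq 'rV[R]_k) :
  cone_gen s1 = cone_gen s2 -> \rank (gens_mx s1) = \rank (gens_mx s2).
Proof.
move=> e; apply/eqP; rewrite eqn_leq !mxrankS // cone_eq_submx // e //.
Qed.

Lemma has_dimE k (S : set 'rV[R]_k) s0 r : S = cone_gen s0 ->
  (has_dim S r <-> r = \rank (gens_mx s0)).
Proof.
move=> ->; split.
  by move=> [s [e <-]]; apply: cone_rank.
by move=> ->; exists s0.
Qed.

End H1.

Section H2.
Variable R : realType.

Lemma lattE k (C : set 'rV[R]_k) x : latt C x <->
  exists t : seq ('rV[R]_k * int), (forall q, q \in t -> C q.1 /\ intmx q.1) /\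
     x = \sum_(q <- t) q.1 *~ q.2.
Proof.
split.
- move=> [s [hs [c ->]]].
  exists [seq (s`_i, c i) | i : 'I_(size s) <- index_enum 'I_(size s)]; split.
    by move=> q /mapP [i _ ->]; apply: hs.
  by rewrite big_map.
- move=> [t [ht ->]].
  exists (map fst t); split.
    move=> i; have := ltn_ord i; rewrite [X in (_ < X)%N]size_map => hi.
    rewrite (nth_map (0, 0%Z)) //; apply: ht; exact: mem_nth.
  exists (fun i => (nth (0, 0%Z) t i).2).
  rewrite (big_nth (0, 0%Z)).
  rewrite -(big_mkord xpredT (fun i : nat => (map fst t)`_i *~ (nth (0,0%Z) t i).2)).
  rewrite size_map; apply: eq_big_nat => i /andP [_ hi].
  by rewrite (nth_map (0, 0%Z)).
Qed.

Lemma latt_ind k (C : set 'rV[R]_k) (P : 'rV[R]_k -> Prop) :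
  P 0 -> (forall a b, P a -> P b -> P (a + b)) -> (forall a z, P a -> P (a *~ z)) ->
  (forall x, C x -> intmx x -> P x) -> forall x, latt C x -> P x.
Proof.
move=> P0 PD PZ Pb x /lattE [t [ht ->]].
elim: t ht => [|q t IH] ht; first by rewrite big_nil.
rewrite big_cons; apply: PD.
  by have [h1 h2] := ht q (mem_head _ _); apply: PZ; apply: Pb.
by apply: IH => q' hq'; apply: ht; rewrite in_cons hq' orbT.
Qed.

Lemma latt0 k (C : set 'rV[R]_k) : latt C 0.
Proof. by apply/lattE; exists [::]; rewrite big_nil. Qed.

Lemma latt_pt k (C : set 'rV[R]_k) x : C x -> intmx x -> latt C x.
Proof.
move=> h1 h2; apply/lattE; exists [:: (x, 1%Z)]; split.
  by move=> q; rewrite inE => /eqP ->.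
by rewrite big_cons big_nil addr0 mulr1z.
Qed.

Lemma lattD k (C : set 'rV[R]_k) a b : latt C a -> latt C b -> latt C (a + b).
Proof.
move=> /lattE [t1 [h1 ->]] /lattE [t2 [h2 ->]]; apply/lattE.
exists (t1 ++ t2); split; last by rewrite big_cat.
by move=> q; rewrite mem_cat => /orP [] ?; [apply: h1 | apply: h2].
Qed.

Lemma lattZ k (C : set 'rV[R]_k) a z : latt C a -> latt C (a *~ z).
Proof.
move=> /lattE [t [h ->]]; apply/lattE.
exists [seq (q.1, (q.2 * z)%R) | q <- t]; split.
  by move=> q /mapP [q' hq' ->] /=; apply: h.
by rewrite big_map mulrz_suml; apply: eq_bigr => q _; rewrite mulrzA.
Qed.

Lemma lattN k (C : set 'rV[R]_k) a : latt C a -> latt C (- a).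
Proof. by move=> h; rewrite -mulrN1z; apply: lattZ. Qed.

Lemma lattB k (C : set 'rV[R]_k) a b : latt C a -> latt C b -> latt C (a - b).
Proof. by move=> ha hb; apply: lattD => //; apply: lattN. Qed.

Lemma latt_mono k (C D : set 'rV[R]_k) x : C `<=` D -> latt C x -> latt D x.
Proof.
move=> hCD; apply: latt_ind; [exact: latt0|exact: lattD|exact: lattZ|].
by move=> y hy hi; apply: latt_pt => //; apply: hCD.
Qed.

Lemma latt_intmx k (C : set 'rV[R]_k) x : latt C x -> intmx x.
Proof.
apply: latt_ind; [exact: intmx0|exact: intmxD|exact: intmxMz|by []].
Qed.

Lemma latt_span k (s : seq 'rV[R]_k) x : latt (cone_gen s) x -> (x <= gens_mx s)%MS.
Proof.
move=> h; apply: (@latt_ind _ _ (fun y => (y <= gens_mx s)%MS) _ _ _ _ x h) => [|a b ha hb|a z ha|y hy _].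
- exact: sub0mx.
- exact: addmx_sub.
- by rewrite -scaler_int scalemx_sub.
- exact: cone_sub.
Qed.

Lemma latt_lin k l (C : set 'rV[R]_k) (D : set 'rV[R]_l) (A : 'M[R]_(k, l)) x :
  (forall y, C y -> intmx y -> latt D (y *m A)) -> latt C x -> latt D (x *m A).
Proof.
move=> h hx; apply: (@latt_ind _ _ (fun y => latt D (y *m A)) _ _ _ _ x hx) => [|a b ha hb|a z ha|y hy hi].
- by rewrite mul0mx; exact: latt0.
- by rewrite mulmxDl; exact: lattD.
- by rewrite -scaler_int -scalemxAl scaler_int; exact: lattZ.
- exact: h.
Qed.

Lemma latt_kill k l (C : set 'rV[R]_k) (A : 'M[R]_(k, l)) x :
  (forall y, C y -> intmx y -> y *m A = 0) -> latt C x -> x *m A = 0.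
Proof.
move=> h hx; apply: (@latt_ind _ _ (fun y => y *m A = 0) _ _ _ _ x hx) => [|a b ha hb|a z ha|y hy hi].
- by rewrite mul0mx.
- by rewrite mulmxDl ha hb addr0.
- by rewrite -scaler_int -scalemxAl ha scaler0.
- exact: h.
Qed.

Lemma latt_sat k (s : seq 'rV[R]_k) z :
  (forall i : 'I_(size s), intmx s`_i) -> (z <= gens_mx s)%MS -> intmx z ->
  latt (cone_gen s) z.
Proof.
move=> hs /submxP [w ez] hz.
pose m i := Num.floor (w 0 i).
have ha : latt (cone_gen s) (z - \sum_(i < size s) s`_i *~ m i).
  apply: latt_pt.
    rewrite ez mul_gens -sumrB.
    exists (fun i => w 0 i - (m i)%:~R); split.
      by move=> i; rewrite subr_ge0 floor_le.
    by apply: eq_bigr => i _; rewrite scalerBl scaler_int.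
  apply: intmxB => //; apply: (big_ind (fun v => intmx v)).
  - exact: intmx0.
  - exact: intmxD.
  - by move=> i _; apply: intmxMz.
have hb : latt (cone_gen s) (\sum_(i < size s) s`_i *~ m i).
  apply: (big_ind (fun v => latt (cone_gen s) v)).
  - exact: latt0.
  - exact: lattD.
  - by move=> i _; apply: lattZ; apply: latt_pt => //; apply: cone_pt.
by have := lattD ha hb; rewrite subrK.
Qed.

Lemma mx_eq_int m l (P Q : 'M[R]_(m, l)) :
  (forall y : 'rV_m, intmx y -> y *m P = y *m Q) -> P = Q.
Proof. by move=> h; apply/row_matrixP => i; rewrite !rowE; apply: h; apply: intmx_delta. Qed.

Lemma qmap_lift k l (C : set 'rV[R]_k) (p : 'M[R]_(k, l)) : qmap C p ->
  exists Y : 'M[R]_(l, k), intmx Y /\ Y *m p = 1%:M.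
Proof.
move=> [hp hs hk].
have h : forall i : 'I_l, exists x : 'rV[R]_k, intmx x /\ x *m p = delta_mx 0 i.
  by move=> i; apply: hs; apply: intmx_delta.
have [g hg] := choice h.
exists (\matrix_i g i); split.
  by move=> i j; rewrite mxE; have [+ _] := hg i; apply.
apply/row_matrixP => i; rewrite row_mul rowK (proj2 (hg i)) rowE mulmx1 //.
Qed.

Lemma qmap_desc k l m (C : set 'rV[R]_k) (p : 'M[R]_(k, l)) (Y : 'M[R]_(l, k))
    (M : 'M[R]_(k, m)) :
  qmap C p -> intmx Y -> Y *m p = 1%:M ->
  (forall y, intmx y -> latt C y -> y *m M = 0) -> p *m (Y *m M) = M.
Proof.
move=> [hp hs hk] hY hYp hM; apply: mx_eq_int => y hy.
apply/eqP; rewrite mulmxA mulmxA -subr_eq0 -mulmxBl; apply/eqP.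
apply: hM; first by apply: intmxB => //; apply: intmx_mul => //; apply: intmx_mul.
apply/hk; first by apply: intmxB => //; apply: intmx_mul => //; apply: intmx_mul.
by rewrite mulmxBl -!mulmxA hYp mulmx1 subrr.
Qed.

Lemma qmap_kerint k l (C : set 'rV[R]_k) (p : 'M[R]_(k, l)) (Y : 'M[R]_(l, k)) x :
  qmap C p -> intmx Y -> Y *m p = 1%:M -> intmx x -> latt C (x *m p *m Y - x).
Proof.
move=> [hp hs hk] hY hYp hx; apply/hk.
  by apply: intmxB => //; apply: intmx_mul => //; apply: intmx_mul.
by rewrite mulmxBl -!mulmxA hYp mulmx1 subrr.
Qed.

Lemma qmap_ker k l (s : seq 'rV[R]_k) (p : 'M[R]_(k, l)) (x : 'rV[R]_k) :
  qmap (cone_gen s) p -> x *m p = 0 -> (x <= gens_mx s)%MS.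
Proof.
move=> hq hx; have [Y [hY hYp]] := qmap_lift hq.
pose Q : 'M[R]_k := 1%:M - p *m Y.
have hQ : (Q <= gens_mx s)%MS.
  apply/row_subP => i; rewrite /Q rowE mulmxBr mulmx1 mulmxA.
  rewrite -opprB; apply: latt_span; apply: lattN.
  apply: qmap_kerint => //; exact: intmx_delta.
have -> : x = x *m Q by rewrite /Q mulmxBr mulmx1 mulmxA hx mul0mx subr0.
exact: submx_trans (submxMl _ _) hQ.
Qed.

End H2.

Section P1.
Variable R : realType.

Lemma scalar11_inj (a b : R) : (a%:M : 'M[R]_1) = b%:M -> a = b.
Proof. by move=> /(congr1 (fun M : 'M[R]_1 => M 0 0)); rewrite !mxE eqxx !mulr1n. Qed.

Lemma img_comp k l m (A : 'M[R]_(k, l)) (B : 'M[R]_(l, m)) C :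
  img B (img A C) = img (A *m B) C.
Proof.
apply/seteqP; split=> y.
  by move=> [z [x hx <-] <-]; exists x => //; rewrite mulmxA.
by move=> [x hx <-]; exists (x *m A); [exists x|rewrite mulmxA].
Qed.

Lemma img1 k (C : set 'rV[R]_k) : img 1%:M C = C.
Proof.
apply/seteqP; split=> y; first by move=> [x hx <-]; rewrite mulmx1.
by move=> hy; exists y => //; rewrite mulmx1.
Qed.

Lemma img_mono k l (A : 'M[R]_(k, l)) C D : C `<=` D -> img A C `<=` img A D.
Proof. by move=> h y [x hx <-]; exists x => //; apply: h. Qed.

Lemma img_inv k l (A : 'M[R]_(k, l)) (B : 'M[R]_(l, k)) C D :
  A *m B = 1%:M -> img A C = img A D -> C = D.
Proof.
by move=> hAB e; rewrite -(img1 C) -(img1 D) -hAB -!img_comp e.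
Qed.

Variable n : nat.
Implicit Types (f : 'rV[R]_n -> R) (C D : set 'rV[R]_n).

Lemma gu_pt f C x t : C x -> 0 <= t -> graph_up f C (row_mx x (f x + t)%:M).
Proof. by move=> hx ht; exists x, t. Qed.

Lemma graph_pt f C x : C x -> graph f C (row_mx x (f x)%:M).
Proof. by move=> hx; exists x. Qed.

Lemma gu_sub f C D : graph_up f C `<=` graph_up f D -> C `<=` D.
Proof.
move=> h x hx; have := h _ (gu_pt f hx (lexx 0)).
by move=> [x' [t [hx' _ /eq_row_mx [-> _]]]].
Qed.

Lemma gu_mono f C D : C `<=` D -> graph_up f C `<=` graph_up f D.
Proof. by move=> h y [x [t [hx ht ->]]]; exists x, t; split=> //; apply: h. Qed.

Lemma graph_sub f C D : graph f C `<=` graph f D -> C `<=` D.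
Proof.
move=> h x hx; have := h _ (graph_pt f hx).
by move=> [x' [hx' /eq_row_mx [-> _]]].
Qed.

Lemma graph_mono f C D : C `<=` D -> graph f C `<=` graph f D.
Proof. by move=> h y [x [hx ->]]; exists x; split=> //; apply: h. Qed.

Lemma gu_inj f C D : graph_up f C = graph_up f D -> C = D.
Proof. by move=> e; apply/seteqP; split; apply: (@gu_sub f); rewrite e. Qed.

Lemma graph_inj f C D : graph f C = graph f D -> C = D.
Proof. by move=> e; apply/seteqP; split; apply: (@graph_sub f); rewrite e. Qed.

Lemma e_in_gu f C : C 0 -> f 0 = 0 -> graph_up f C (row_mx 0 1%:M).
Proof. by move=> h0 f0; exists 0, 1; split=> //; rewrite f0 add0r. Qed.

Lemma e_notin_graph f C : f 0 = 0 -> ~ graph f C (row_mx 0 1%:M).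
Proof.
move=> f0 [x [hx /eq_row_mx [ex e1]]]; move: e1; rewrite -ex f0 => /scalar11_inj.
by move/eqP; rewrite oner_eq0.
Qed.

Lemma gu_not_graph f C D : C 0 -> f 0 = 0 -> ~ (graph_up f C `<=` graph f D).
Proof. by move=> h0 f0 h; apply: (e_notin_graph (C := D) f0); apply: h; apply: e_in_gu. Qed.

Lemma cone_kill k (s : seq 'rV[R]_k) l (p : 'M[R]_(k, l)) x :
  qmap (cone_gen s) p -> (forall i : 'I_(size s), intmx s`_i) -> cone_gen s x -> x *m p = 0.
Proof.
move=> [hp hs hk] hi hx; apply: (span_ker (s := s)); last exact: cone_sub.
by move=> i; apply/hk => //; apply: latt_pt => //; apply: cone_pt.
Qed.

Lemma fan_cone (F : wfan R n) C : fan (cones F) -> cones F C ->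
  exists s, (forall i : 'I_(size s), intmx s`_i) /\ C = cone_gen s.
Proof. by move=> [_ h _ _] /h [[s [h1 h2]] _]; exists s. Qed.

Lemma fan_face (F : wfan R n) C D : fan (cones F) -> cones F C -> face D C -> cones F D.
Proof. by move=> [_ _ h _]; apply: h. Qed.

Lemma divf_cones (F : wfan R n) f D : fan (cones F) -> cones (divf F f) D -> cones F D.
Proof. by move=> hF [tau [[ht _] _ hf]]; apply: fan_face hf. Qed.

Lemma cone_has0 (F : wfan R n) C : fan (cones F) -> cones F C -> C 0.
Proof. by move=> hF /(fan_cone hF) [s [_ ->]]; apply: cone0. Qed.

Lemma f0 (F : wfan R n) f C : fan (cones F) -> meromorphic F f -> cones F C -> f 0 = 0.
Proof.
move=> hF hf hC; have [m [_ hm]] := hf _ hC.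
by rewrite hm ?lform0 //; apply: (cone_has0 hF).
Qed.

Lemma row0_kill k (p : 'M[R]_(n + 1, k)) (c : R) :
  row_mx 0 1%:M *m p = 0 -> row_mx (0 : 'rV[R]_n) c%:M *m p = 0.
Proof.
move=> h; have -> : row_mx (0 : 'rV[R]_n) c%:M = c *: row_mx 0 1%:M.
  by rewrite scale_row_mx scaler0 scalemx1.
by rewrite -scalemxAl h scaler0.
Qed.

Lemma part1 (F : wfan R n) f d : tropical_fan F d -> meromorphic F f ->
  forall delta, cones (divf F f) delta ->
     forall k (p : 'M[R]_(n + 1, k)), qmap (graph_up f delta) p ->
     forall k' (p' : 'M[R]_(n, k')), qmap delta p' ->
     fan_iso (star (modif F f) (graph_up f delta) p) (star (divf F f) delta p').
Proof.
move=> [hF _ _] hf delta hd k p hp k' p' hp'.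
have hdF := divf_cones hF hd.
have [sd [hsd ed]] := fan_cone hF hdF.
have [m [hm hfm]] := hf _ hdF.
have F0 : f 0 = 0 := f0 hF hf hdF.
have d0 : delta 0 := cone_has0 hF hdF.
have [Y [hY hYp]] := qmap_lift hp.
have [Y' [hY' hYp']] := qmap_lift hp'.
have dkill : forall x, delta x -> x *m p' = 0.
  move=> x hx; apply: (@cone_kill _ sd _ p') => //. by rewrite -ed. by rewrite -ed.
pose M1 : 'M[R]_(n + 1, k') := col_mx p' 0.
have M1gu : forall C, img M1 (graph_up f C) = img p' C.
  move=> C; apply/seteqP; split=> y.
    by move=> [z [x [t [hx _ ->]]] <-]; exists x => //; rewrite mul_row_col mulmx0 addr0.
  move=> [x hx <-]; exists (row_mx x (f x + 0)%:M); first by apply: gu_pt.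
  by rewrite mul_row_col mulmx0 addr0.
have hM1 : forall y, intmx y -> latt (graph_up f delta) y -> y *m M1 = 0.
  move=> y _; apply: latt_kill => z [x [t [hx _ ->]]] _.
  by rewrite mul_row_col mulmx0 addr0 dkill.
pose A := Y *m M1.
have hA : p *m A = M1 by apply: (qmap_desc hp hY hYp hM1).
have ekill : row_mx 0 1%:M *m p = 0.
  case: hp => _ _ hk; apply/hk; first by apply: intmx_row_mx; [apply: intmx0|apply: intmx1].
  by apply: latt_pt; [apply: e_in_gu|apply: intmx_row_mx; [apply: intmx0|apply: intmx1]].
pose B := Y' *m (row_mx 1%:M 0 *m p).
have hBA : B *m A = 1%:M.
  by rewrite /B -!mulmxA hA /M1 mul_row_col mul1mx mulmx0 addr0 hYp'.
have hfint : forall x, delta x -> intmx x -> intmx ((f x + 0)%:M : 'M[R]_1).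
  by move=> x hx hix; apply: intmx_scalar; rewrite addr0 hfm //; apply: lform_int.
pose Top := row_mx 1%:M 0 *m p.
have eTop : forall z : 'rV_n, z *m Top = row_mx z 0 *m p.
  by move=> z; rewrite /Top mulmxA mul_mx_row mulmx1 mulmx0.
have kTop : forall z, latt delta z -> z *m Top = 0.
  move=> z; apply: latt_kill => x hx hix; rewrite eTop.
  have ex : row_mx x (0 : 'M[R]_1) = row_mx x (f x + 0)%:M - row_mx 0 (f x)%:M.
    by rewrite opp_row_mx add_row_mx subr0 addr0 subrr.
  rewrite ex mulmxBl row0_kill // subr0.
  case: hp => _ _ hkk; apply/hkk.
    by apply: intmx_row_mx => //; apply: hfint.
  apply: latt_pt; first by apply: gu_pt.
  by apply: intmx_row_mx => //; apply: hfint.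
have hM1B : M1 *m B = p.
  apply: mx_eq_int => y hy.
  have hy1 : intmx (lsubmx y) by move=> i j; rewrite mxE; apply: hy.
  have ey : y *m p = lsubmx y *m Top.
    rewrite eTop -{1}(hsubmxK y).
    have -> : row_mx (lsubmx y) (rsubmx y) = row_mx (lsubmx y) 0 + row_mx 0 (rsubmx y).
      by rewrite add_row_mx addr0 add0r.
    by rewrite mulmxDl (mx11_scalar (rsubmx y)) row0_kill // addr0.
  have eyM : y *m M1 = lsubmx y *m p'.
    by rewrite -{1}(hsubmxK y) mul_row_col mulmx0 addr0.
  rewrite mulmxA eyM /B mulmxA -/Top ey.
  rewrite -[X in X *m Top = _](subrK (lsubmx y)) mulmxDl kTop ?add0r //.
  exact: (qmap_kerint hp' hY' hYp' hy1).
have hAB : A *m B = 1%:M.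
  by rewrite -[LHS]mul1mx -[in LHS]hYp -mulmxA (mulmxA p) hA hM1B hYp.
have imgA_gu : forall D, img A (img p (graph_up f D)) = img p' D.
  by move=> D; rewrite img_comp hA M1gu.
have modif_case : forall T, cones (modif F f) T -> graph_up f delta `<=` T ->
    exists d', [/\ cones (divf F f) d', delta `<=` d' & T = graph_up f d'].
  move=> T [[s0 hs0 <-]|[d' hd' <-]] hsub.
    by exfalso; apply: (gu_not_graph d0 F0 hsub).
  by exists d'; split=> //; exact: (gu_sub hsub).
exists A, B; split.
- split; [by apply: intmx_mul; [|apply: intmx_col_mx; [case: hp'|apply: intmx0]]|].
  apply: intmx_mul => //; apply: intmx_mul; last by case: hp.
  by apply: intmx_row_mx; [apply: intmx1|apply: intmx0].
- exact: hAB.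
- exact: hBA.
- rewrite /=; apply/seteqP; split=> X /=.
    move=> [d' [hd' hsub] <-]; exists (img p (graph_up f d')); last exact: imgA_gu.
    exists (graph_up f d') => //; split; last exact: gu_mono.
    by right; exists d'.
  move=> [C [T [hT hsub] <-] <-].
  have [d' [hd' hs' eT]] := modif_case T hT hsub; rewrite eT.
  by exists d' => //; rewrite imgA_gu.
- move=> C [[T [hT hsub] eC] _] /=.
  pose S2 := [set t | [/\ cones (divf F f) t, delta `<=` t & img p' t = img A C]].
  have -> : [set T0 | [/\ cones (modif F f) T0, graph_up f delta `<=` T0 & img p T0 = C]]
      = graph_up f @` S2.
    apply/seteqP; split=> X.
      move=> [hX hs hC]; have [d' [hd' hs' eX]] := modif_case X hX hs.
      exists d' => //; split=> //; rewrite -imgA_gu -hC eX //.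
    move=> [d' [hd' hs' hC] <-]; split.
    - by right; exists d'.
    - exact: gu_mono.
    - by apply: (img_inv hAB); rewrite imgA_gu.
  rewrite fsbig_image; last by move=> x y _ _; apply: gu_inj.
  apply: eq_fsbigr => d' /set_mem [hd' _ _] /=.
  have hd'0 : d' 0 := cone_has0 hF (divf_cones hF hd').
  rewrite (_ : [set s0 | cones F s0 /\ graph f s0 = graph_up f d'] = set0).
    rewrite (_ : [set d'' | cones (divf F f) d'' /\ graph_up f d'' = graph_up f d'] = [set d']).
      by rewrite fsbig_set0 fsbig_set1 add0r.
    apply/seteqP; split=> x /=; first by move=> [_ /gu_inj].
    by move=> ->.
  apply/seteqP; split=> x //= [_ ex].
  by apply: (gu_not_graph (D := x) hd'0 F0); rewrite ex.
Qed.

End P1.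

Section P2a.
Variable R : realType.
Variable n : nat.
Variable F : wfan R n.
Hypothesis hF : fan (cones F).
Variable sg : set 'rV[R]_n.
Hypothesis hsg : cones F sg.
Variable ss : seq 'rV[R]_n.
Hypothesis hss : forall i : 'I_(size ss), intmx ss`_i.
Hypothesis ess : sg = cone_gen ss.
Variable k' : nat.
Variable p' : 'M[R]_(n, k').
Hypothesis hp' : qmap sg p'.
Variable Y' : 'M[R]_(k', n).
Hypothesis hY' : intmx Y'.
Hypothesis hYp' : Y' *m p' = 1%:M.

Let St := star F sg p'.
Implicit Types (x : 'rV[R]_n) (t d : set 'rV[R]_n).

Lemma kerS x : x *m p' = 0 -> (x <= gens_mx ss)%MS.
Proof. by move=> hx; apply: (qmap_ker (p := p')) => //; rewrite -ess. Qed.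

Lemma sg_kill x : sg x -> x *m p' = 0.
Proof. by move=> hx; apply: (@cone_kill _ _ ss _ p') => //; rewrite -ess. Qed.

Lemma span_kill x : (x <= gens_mx ss)%MS -> x *m p' = 0.
Proof.
apply: span_ker => i; apply: sg_kill; rewrite ess; exact: cone_pt.
Qed.

Lemma ker_split x : x *m p' = 0 -> exists a b, [/\ sg a, sg b & x = a - b].
Proof. by move=> /kerS /span_split [a [b [ha hb ->]]]; exists a, b; rewrite ess. Qed.

Lemma desc_form (u : 'cV[R]_n) : (forall x, sg x -> lform u x = 0) ->
  p' *m (Y' *m u) = u.
Proof.
move=> hu; apply: (qmap_desc hp' hY' hYp') => y _; apply: latt_kill => x hx _.
by rewrite lformE hu // raddf0.
Qed.

Lemma lform_desc (u : 'cV[R]_n) x : (forall x, sg x -> lform u x = 0) ->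
  lform (Y' *m u) (x *m p') = lform u x.
Proof. by move=> hu; rewrite /lform -mulmxA desc_form. Qed.

Lemma coneF t : cones F t -> exists s, (forall i : 'I_(size s), intmx s`_i) /\ t = cone_gen s.
Proof. exact: fan_cone. Qed.

Lemma coneF_add t a b : cones F t -> t a -> t b -> t (a + b).
Proof. by move=> /coneF [s [_ ->]]; apply: cone_add. Qed.

Lemma img_sub_inv t1 t2 : cones F t1 -> cones F t2 -> sg `<=` t1 -> sg `<=` t2 ->
  img p' t1 `<=` img p' t2 -> t1 `<=` t2.
Proof.
move=> h1 h2 s1 s2 hi x hx.
have [y hy exy] := hi _ (ex_intro2 _ _ x hx erefl).
have [a [b [ha hb eab]]] : exists a b, [/\ sg a, sg b & x - y = a - b].
  by apply: ker_split; rewrite mulmxBl exy subrr.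
have hxb : t1 (x + b) by apply: coneF_add => //; apply: s1.
have hya : t2 (x + b).
  have ex : x = a - b + y by rewrite -eab subrK.
  have -> : x + b = y + a by rewrite ex addrAC subrK addrC.
  by apply: coneF_add => //; apply: s2.
case: hF => _ _ _ hI; have [u [hu eu]] := hI _ _ h1 h2.
have : (t1 `&` t2) (x + b) by [].
rewrite eu => -[_]; rewrite lformD => h0.
have hux := hu _ hx; have hub := hu _ (s1 _ hb).
have ux0 : lform u x = 0.
  by apply/eqP; rewrite eq_le hux andbT -h0 lerDl.
have : (t1 `&` t2) x by rewrite eu.
by case.
Qed.

Lemma img_inj t1 t2 : cones F t1 -> cones F t2 -> sg `<=` t1 -> sg `<=` t2 ->
  img p' t1 = img p' t2 -> t1 = t2.
Proof.
move=> h1 h2 s1 s2 e; apply/seteqP; split; apply: img_sub_inv => //; rewrite e //.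
Qed.

Lemma conesSt X : cones St X <-> exists t, [/\ cones F t, sg `<=` t & X = img p' t].
Proof.
split; first by move=> [t [ht st] <-]; exists t.
by move=> [t [ht st ->]]; exists t.
Qed.

Lemma maxc_star t : cones F t -> sg `<=` t ->
  (maxc (cones St) (img p' t) <-> maxc (cones F) t).
Proof.
move=> ht st; split.
- move=> [_ hm]; split=> // D hD tD.
  have sD : sg `<=` D by apply: subset_trans tD.
  apply: img_inj => //; apply: hm; first by apply/conesSt; exists D.
  exact: img_mono.
- move=> [_ hm]; split; first by apply/conesSt; exists t.
  move=> X /conesSt [D [hD sD ->]] tD.
  by rewrite (hm D hD (img_sub_inv ht hD st sD tD)).
Qed.

Lemma up_star t : cones F t -> sg `<=` t ->
  up St (img p' t) = [set img p' s | s in up F t].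
Proof.
move=> ht st; apply/seteqP; split=> X.
- move=> [hX tX]; have [s [hs ss' eX]] := (conesSt X).1 hX.1.
  exists s; last by rewrite eX.
  split; first by apply/(maxc_star hs ss'); rewrite -eX.
  by apply: img_sub_inv => //; rewrite -eX.
- move=> [s [hs ts] <-]; split; last exact: img_mono.
  by apply/maxc_star => //; [case: hs|apply: subset_trans ts].
Qed.

Lemma wt_star t : cones F t -> sg `<=` t -> wt St (img p' t) = wt F t.
Proof.
move=> ht st /=.
rewrite (_ : [set t0 | [/\ cones F t0, sg `<=` t0 & img p' t0 = img p' t]] = [set t]).
  by rewrite fsbig_set1.
apply/seteqP; split=> x /=; first by move=> [hx sx e]; apply: img_inj.
by move=> ->.
Qed.

Lemma face_img d t : face d t -> sg `<=` d -> face (img p' d) (img p' t).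
Proof.
move=> [u [hu ed]] sd.
have hu0 : forall x, sg x -> lform u x = 0.
  by move=> x /sd; rewrite ed => -[].
exists (Y' *m u); split.
  by move=> _ [x hx <-]; rewrite lform_desc //; apply: hu.
apply/seteqP; split=> y.
  by move=> [x]; rewrite ed => -[hx hux] <-; split; [exists x|rewrite lform_desc].
move=> [[x hx <-]]; rewrite lform_desc // => hux.
by exists x => //; rewrite ed.
Qed.

Lemma face_lift D t : face D (img p' t) -> sg `<=` t ->
  exists d, [/\ face d t, sg `<=` d & D = img p' d].
Proof.
move=> [u [hu eD]] st.
have hl : forall x, lform (p' *m u) x = lform u (x *m p') by move=> x; rewrite /lform mulmxA.
exists [set x | t x /\ lform (p' *m u) x = 0]; split.
- exists (p' *m u); split=> // x hx; rewrite hl; apply: hu; by exists x.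
- by move=> x hx; split; [apply: st|rewrite hl sg_kill // lform0].
- rewrite eD; apply/seteqP; split=> y.
    by move=> [[x hx <-] h0]; exists x => //; split=> //; rewrite hl.
  by move=> [x [hx h0] <-]; split; [exists x|rewrite -hl].
Qed.

Lemma face_img_iff t s : cones F t -> cones F s -> sg `<=` t -> sg `<=` s ->
  (face (img p' t) (img p' s) <-> face t s).
Proof.
move=> ht hs st ss'; split; last by move=> h; apply: face_img.
move=> /face_lift [] // d [hd sd e].
have hdF : cones F d by apply: fan_face hd.
by rewrite (img_inj ht hdF st sd e).
Qed.


Lemma face_sub d t : face d t -> d `<=` t.
Proof. by move=> [u [_ ->]] x []. Qed.

Lemma cone_genE k (s : seq 'rV[R]_k) y : cone_gen s y <->
  exists c : nat -> R, (forall i, 0 <= c i) /\ y = \sum_(i < size s) c i *: s`_i.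
Proof.
split.
  move=> [c [c0 ->]].
  exists (fun i => if @insub _ (fun j => (j < size s)%N) 'I_(size s) i is Some j then c j else 0).
  split; first by move=> i; case: insub => // j; apply: c0.
  by apply: eq_bigr => i _; rewrite valK.
by move=> [c [c0 ->]]; exists (fun i => c i).
Qed.

Lemma img_cone k l (A : 'M[R]_(k, l)) (s : seq 'rV[R]_k) :
  img A (cone_gen s) = cone_gen (map (fun w0 : 'rV[R]_k => w0 *m A) s).
Proof.
apply/seteqP; split=> y.
  move=> [x /cone_genE [c [c0 ->]] <-]; apply/cone_genE; exists c; split=> //.
  rewrite size_map mulmx_suml; apply: eq_bigr => i _.
  by rewrite (nth_map 0) // -scalemxAl.
move=> /cone_genE [c [c0 ->]]; exists (\sum_(i < size s) c i *: s`_i).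
  by apply/cone_genE; exists c.
rewrite size_map mulmx_suml; apply: eq_bigr => i _.
by rewrite (nth_map 0) // -scalemxAl.
Qed.

Lemma gens_map_rank k l (A : 'M[R]_(k, l)) (s : seq 'rV[R]_k) :
  \rank (gens_mx (map (fun w0 : 'rV[R]_k => w0 *m A) s)) = \rank (gens_mx s *m A).
Proof.
apply/eqP; rewrite eqn_leq !mxrankS //.
  apply/row_subP => i; rewrite row_mul gens_row.
  have hi : (i < size (map (fun w0 : 'rV[R]_k => w0 *m A) s))%N by rewrite size_map.
  by rewrite -(nth_map 0 0 (fun w0 : 'rV[R]_k => w0 *m A)) // -(gens_row (Ordinal hi)) row_sub.
apply/row_subP => i; rewrite gens_row.
have hi : (i < size s)%N by rewrite -(size_map (fun w0 : 'rV[R]_k => w0 *m A)).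
rewrite (nth_map 0) // -(gens_row (s := s) (Ordinal hi)) -row_mul; exact: row_sub.
Qed.

Lemma ker_eq : (kermx p' == gens_mx ss)%MS.
Proof.
apply/andP; split.
  apply/row_subP => i; apply: kerS; by rewrite -row_mul mulmx_ker row0.
apply/sub_kermxP; apply/row_matrixP => i; rewrite row_mul gens_row row0.
by apply: sg_kill; rewrite ess; apply: cone_pt.
Qed.

Lemma rank_img (st : seq 'rV[R]_n) : sg `<=` cone_gen st ->
  (\rank (gens_mx st *m p') + \rank (gens_mx ss) = \rank (gens_mx st))%N.
Proof.
move=> h; rewrite -(mxrank_mul_ker (gens_mx st) p').
have hk : (kermx p' <= gens_mx st)%MS.
  apply: submx_trans (proj1 (andP ker_eq)) _; apply: cone_eq_submx.
  by rewrite -ess.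
rewrite (capmx_idPr hk); congr (_ + _)%N.
by apply/esym/eqmx_rank; exact: ker_eq.
Qed.

Lemma has_dim_img (st : seq 'rV[R]_n) r :
  has_dim (img p' (cone_gen st)) r <-> r = \rank (gens_mx st *m p').
Proof. by rewrite -gens_map_rank; apply: has_dimE; rewrite img_cone. Qed.

Lemma facet_img t s : cones F t -> cones F s -> sg `<=` t -> sg `<=` s ->
  (facet (img p' t) (img p' s) <-> facet t s).
Proof.
move=> ht hs st ss'; have [sat_ [_ eat]] := coneF ht; have [as_ [_ eas]] := coneF hs.
have r1 := rank_img (eq_ind _ (fun X => sg `<=` X) st _ eat).
have r2 := rank_img (eq_ind _ (fun X => sg `<=` X) ss' _ eas).
split=> -[hf [r [h1 h2]]].
- split; first by apply/face_img_iff.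
  exists (\rank (gens_mx sat_)); split; first by apply/(has_dimE _ eat).
  apply/(has_dimE _ eas); move: h1 h2; rewrite eat eas !has_dim_img => e1 e2.
  lia.
- split; first by apply/face_img_iff.
  exists (r - \rank (gens_mx ss))%N; rewrite eat eas !has_dim_img.
  move: h1 h2; rewrite (has_dimE _ eat) (has_dimE _ eas) => e1 e2.
  split; lia.
Qed.

Lemma codim_star t : cones F t -> sg `<=` t -> (codim1 St (img p' t) <-> codim1 F t).
Proof.
move=> ht st; split.
- move=> [_ [S [hS hf]]]; split=> //.
  have [s [hs ss' eS]] := (conesSt S).1 hS.1.
  exists s; split; first by apply/(maxc_star hs ss'); rewrite -eS.
  by apply/(facet_img ht hs st ss'); rewrite -eS.
- move=> [_ [s [hs hf]]]; have ss' : sg `<=` s.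
    by apply: subset_trans st (face_sub hf.1).
  split; first by apply/conesSt; exists t.
  exists (img p' s); split; first by apply/maxc_star => //; case: hs.
  by apply/facet_img => //; case: hs.
Qed.

Lemma imgMz x z : (x *~ z) *m p' = (x *m p') *~ z.
Proof. by rewrite -scaler_int -scalemxAl scaler_int. Qed.

Lemma latt_img t y : cones F t -> sg `<=` t ->
  (latt (img p' t) y <-> exists x, latt t x /\ y = x *m p').
Proof.
move=> ht st; have [s0 [hs0 et]] := coneF ht; split; last first.
  move=> [x [hx ->]]; apply: latt_lin hx => w hw hiw; apply: latt_pt.
    by exists w.
  by apply: intmx_mul => //; case: hp'.
move=> hy; apply: (latt_ind (C := img p' t) (P := fun y => exists x, latt t x /\ y = x *m p') _ _ _ _ hy).
- by exists 0; split; [apply: latt0|rewrite mul0mx].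
- move=> a b [x1 [h1 ->]] [x2 [h2 ->]]; exists (x1 + x2).
  by split; [apply: lattD|rewrite mulmxDl].
- move=> a z [x1 [h1 ->]]; exists (x1 *~ z); split; [apply: lattZ|rewrite imgMz] => //.
- move=> y0 [w hw <-] hiy; exists (w *m p' *m Y'); split; last first.
    by rewrite -mulmxA hYp' mulmx1.
  rewrite et; apply: latt_sat => //.
    have hk0 : (w *m p' *m Y' - w) *m p' = 0.
      by rewrite mulmxBl -(mulmxA (w *m p') Y' p') hYp' mulmx1 subrr.
    have [a [b [ha hb eab]]] := ker_split hk0.
    rewrite -(subrK w (w *m p' *m Y')) eab; apply: addmx_sub.
      apply: addmx_sub; first by apply: cone_sub; rewrite -et; apply: st.
      by rewrite (eqmx_opp _); apply: cone_sub; rewrite -et; apply: st.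
    by apply: cone_sub; rewrite -et.
  by apply: intmx_mul => //.
Qed.

Lemma latt_sg_kill x : latt sg x -> x *m p' = 0.
Proof. by case: hp' => _ _ hk hx; apply/hk => //; apply: latt_intmx hx. Qed.

Lemma kill_latt x : intmx x -> x *m p' = 0 -> latt sg x.
Proof. by case: hp' => _ _ hk hx h0; apply/hk. Qed.

Lemma nvec_img s t v : cones F s -> cones F t -> sg `<=` t -> t `<=` s ->
  nvec s t v -> nvec (img p' s) (img p' t) (v *m p').
Proof.
move=> hs ht st ts [hv hl [a [b [c [ha hb hc ev]]]]].
have ss' : sg `<=` s by apply: subset_trans ts.
split.
- by apply: intmx_mul => //; case: hp'.
- move=> y; rewrite (latt_img _ hs ss'); split.
    move=> [x [hx ->]]; have [y' [m [hy' ->]]] := (hl x).1 hx.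
    exists (y' *m p'), m; split; first by apply/(latt_img _ ht st); exists y'.
    by rewrite mulmxDl imgMz.
  move=> [y'' [m [/(latt_img _ ht st) [y' [hy' ->]] ->]]].
  exists (y' + v *~ m); split; first by apply/hl; exists y', m.
  by rewrite mulmxDl imgMz.
- exists (a *m p'), (b *m p'), (c *m p'); split.
  + by exists a.
  + by exists b.
  + by exists c.
  by rewrite ev mulmxBl mulmxDl.
Qed.

Lemma nvec_lift s t v'' : cones F s -> cones F t -> sg `<=` t -> t `<=` s ->
  nvec (img p' s) (img p' t) v'' -> exists v, nvec s t v /\ v *m p' = v''.
Proof.
move=> hs ht st ts [hv hl [a'' [b'' [c'' [[a ha <-] [b hb <-] [c hc <-] ev]]]]].
have ss' : sg `<=` s by apply: subset_trans ts.
have [s0 [_ es]] := coneF hs; have [t0 [_ et]] := coneF ht.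
pose z := v'' *m Y'.
have hz : intmx z by apply: intmx_mul.
have ez : z *m p' = v'' by rewrite -mulmxA hYp' mulmx1.
exists z; split=> //; split=> //.
- move=> x; split.
  + move=> hx; have := (latt_img _ hs ss').2 (ex_intro _ x (conj hx erefl)).
    move=> /hl [y'' [m [/(latt_img _ ht st) [y [hy ->]] e]]].
    exists (y + (x - y - z *~ m)), m; split.
      apply: lattD => //; apply: latt_mono st _; apply: kill_latt.
        apply: intmxB; [apply: intmxB|apply: intmxMz] => //; [apply: latt_intmx hx|apply: latt_intmx hy].
      by rewrite !mulmxBl e imgMz ez [_ + v'' *~ m]addrC addrK subrr.
    by rewrite -addrA subrK addrC subrK.
  + move=> [y [m [hy ->]]]; apply: lattD; first by apply: latt_mono ts _.
    apply: lattZ.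
    have : latt (img p' s) v''.
      by apply/hl; exists 0, 1%Z; split; [apply: latt0|rewrite add0r mulr1z].
    move=> /(latt_img _ hs ss') [x0 [hx ex]].
    rewrite -(subrK x0 z); apply: lattD => //; apply: latt_mono ss' _.
    apply: kill_latt; first by apply: intmxB => //; apply: latt_intmx hx.
    by rewrite mulmxBl ez ex subrr.
- have hk0 : (z - (a + b - c)) *m p' = 0.
    by rewrite mulmxBl ez ev !mulmxBl !mulmxDl subrr.
  have [a1 [b1 [ha1 hb1 e1]]] := ker_split hk0.
  exists a, (b + a1), (c + b1); split=> //.
  + by apply: coneF_add => //; apply: st.
  + by apply: coneF_add => //; apply: st.
  have -> : z = (a + b - c) + (a1 - b1) by rewrite -e1 addrC subrK.
  by rewrite opprD addrA -!addrA [- c + _]addrCA.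
Qed.

Definition oval k (U : set (set 'rV[R]_k)) (w : set 'rV[R]_k -> int)
  (nv : set 'rV[R]_k -> 'rV[R]_k) (fm : set 'rV[R]_k -> 'cV[R]_k) (ft : 'cV[R]_k) : R :=
  - (\sum_(s \in U) (w s)%:~R * lform (fm s) (nv s)) + lform ft (\sum_(s \in U) nv s *~ w s).

Lemma lformBm k (a b : 'cV[R]_k) (v : 'rV[R]_k) : lform (a - b) v = lform a v - lform b v.
Proof. by rewrite /lform mulmxBr !mxE. Qed.

Lemma lformDm k (a b : 'cV[R]_k) (v : 'rV[R]_k) : lform (a + b) v = lform a v + lform b v.
Proof. by rewrite /lform mulmxDr !mxE. Qed.

Lemma lformM k l0 (A : 'M[R]_(k, l0)) (u : 'cV[R]_l0) (v : 'rV[R]_k) :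
  lform (A *m u) v = lform u (v *m A).
Proof. by rewrite /lform mulmxA. Qed.

Lemma oval_shift k (U : set (set 'rV[R]_k)) (w : set 'rV[R]_k -> int)
  (nv : set 'rV[R]_k -> 'rV[R]_k) (fm : set 'rV[R]_k -> 'cV[R]_k) (ft l0 : 'cV[R]_k) :
  finite_set U ->
  - (\sum_(s \in U) (w s)%:~R * (lform (fm s) (nv s) - lform l0 (nv s)))
  + (lform ft (\sum_(s \in U) nv s *~ w s) - lform l0 (\sum_(s \in U) nv s *~ w s))
  = oval U w nv fm ft.
Proof.
move=> hU; rewrite /oval !fsbig_finite //.
have aux : forall (r : seq (set 'rV[R]_k)) (m : 'cV[R]_k), lform m (\sum_(i <- r) nv i *~ w i)
    = \sum_(i <- r) (w i)%:~R * lform m (nv i).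
  by move=> r m; rewrite lform_sum; apply: eq_bigr => i _; rewrite lformMz -mulrzl.
rewrite !aux; under eq_bigr do rewrite mulrBr.
rewrite sumrB; lra.
Qed.

Definition pre (X : set 'rV[R]_k') : set 'rV[R]_n :=
  xget set0 [set t | [/\ cones F t, sg `<=` t & img p' t = X]].

Lemma pre_img t : cones F t -> sg `<=` t -> pre (img p' t) = t.
Proof.
move=> ht st; apply: xget_unique; first by split.
by move=> t' [ht' st' e]; apply: img_inj.
Qed.

Variable l : 'cV[R]_n.

Lemma oval_img (U : set (set 'rV[R]_n)) nv fm ft nv'' fm'' ft'' :
  U `<=` [set s | cones F s /\ sg `<=` s] -> finite_set U ->
  (forall s, U s -> nv'' (img p' s) = nv s *m p') ->
  (forall s, U s -> lform (fm'' (img p' s)) (nv s *m p') =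
                    lform (fm s) (nv s) - lform l (nv s)) ->
  (forall v, lform ft'' (v *m p') = lform ft v - lform l v) ->
  oval [set img p' s | s in U] (wt St) nv'' fm'' ft'' = oval U (wt F) nv fm ft.
Proof.
move=> hU fU hnv hfm hft.
have inj : set_inj U (img p').
  by move=> a b /set_mem ha /set_mem hb; have [ha1 sa] := hU a ha; have [hb1 sb] := hU b hb; apply: img_inj.
rewrite /oval !(fsbig_image _ _ _ inj).
rewrite (eq_fsbigr (fun s => (wt F s)%:~R * (lform (fm s) (nv s) - lform l (nv s)))); last first.
  move=> s /set_mem hs; have [h1 h2] := hU _ hs.
  by rewrite wt_star // hnv // hfm.
rewrite (eq_fsbigr (fun s => (nv s *~ wt F s) *m p')); last first.
  move=> s /set_mem hs; have [h1 h2] := hU _ hs.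
  by rewrite wt_star // hnv // imgMz.
have -> : \sum_(s \in U) (nv s *~ wt F s) *m p' = (\sum_(s \in U) nv s *~ wt F s) *m p'.
  by rewrite !fsbig_finite // mulmx_suml.
by rewrite hft oval_shift.
Qed.

Lemma upF_fin t : finite_set (up F t).
Proof.
case: hF => hfin _ _ _; apply: sub_finite_set hfin.
by move=> s [[hs _] _].
Qed.

Variable f : 'rV[R]_n -> R.
Hypothesis hfl : forall x, sg x -> f x = lform l x.
Hypothesis hl : intmx l.
Variable g : 'rV[R]_k' -> R.
Hypothesis hg : forall t, cones F t -> sg `<=` t -> forall x, t x -> g (x *m p') = f x - lform l x.

Lemma ord_star t : cones F t -> sg `<=` t -> ord St g (img p' t) = ord F f t.
Proof.
move=> ht st.
have hU : forall s, up F t s -> cones F s /\ sg `<=` s.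
  by move=> s [[hs _] ts]; split=> //; apply: subset_trans ts.
have hU' : forall s, up F t s \/ s = t -> cones F s /\ sg `<=` s.
  by move=> s [/hU //|->].
rewrite /ord; congr (xget _ _); apply/seteqP; split=> z.
- move=> [nv'' [fm'' [hnv hfm hz]]].
  have hnv' : forall s, exists v, up F t s -> nvec s t v /\ v *m p' = nv'' (img p' s).
    move=> s; case: (pselect (up F t s)) => h; last by exists 0.
    have [hs ss'] := hU s h.
    have hX : up St (img p' t) (img p' s) by rewrite up_star //; exists s.
    have [v hv] := nvec_lift hs ht st h.2 (hnv _ hX).
    by exists v.
  have [nv hnvF] := choice hnv'.
  have hfm' : forall s, up F t s \/ s = t ->
      intmx (fm'' (img p' s)) /\ forall y, img p' s y -> g y = lform (fm'' (img p' s)) y.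
    move=> s [h|->]; last by apply: hfm; right.
    by apply: hfm; left; rewrite up_star //; exists s.
  exists nv, (fun s => p' *m fm'' (img p' s) + l); split.
  + by move=> s hs; exact: (hnvF s hs).1.
  + move=> s hs; have [hi he] := hfm' s hs; have [hsF ss'] := hU' s hs.
    split; first by apply: intmxD => //; apply: intmx_mul => //; case: hp'.
    move=> x hx; rewrite lformDm lformM -he; last by exists x.
    by rewrite (hg hsF ss' hx) subrK.
  + rewrite hz.
    have -> : up St (img p' t) = [set img p' s | s in up F t] by rewrite up_star.
    apply: oval_img.
    * by move=> s /hU.
    * exact: upF_fin.
    * by move=> s hs; rewrite (hnvF s hs).2.
    * by move=> s hs; rewrite lformDm addrK lformM.
    * by move=> v; rewrite lformDm addrK lformM.
- move=> [nv [fm [hnv hfm hz]]].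
  have van : forall s, up F t s \/ s = t -> forall x, sg x -> lform (fm s - l) x = 0.
    move=> s hs x hx; have [hsF ss'] := hU' s hs.
    by rewrite lformBm -(proj2 (hfm s hs)) ?hfl ?subrr //; apply: ss'.
  exists (fun X => nv (pre X) *m p'), (fun X => Y' *m (fm (pre X) - l)); split.
  + move=> X; rewrite up_star // => -[s hs <-]; have [hsF ss'] := hU s hs.
    rewrite pre_img //; apply: (nvec_img hsF ht st hs.2); exact: hnv.
  + move=> X hX.
    have [s hs eX] : exists2 s, up F t s \/ s = t & X = img p' s.
      case: hX => [|->]; last by exists t; [right|].
      by rewrite up_star // => -[s hs <-]; exists s; [left|].
    have [hsF ss'] := hU' s hs; rewrite eX pre_img //.
    split.
      by apply: intmx_mul => //; apply: intmxB => //; exact: (proj1 (hfm s hs)).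
    move=> _ [x hx <-]; rewrite lform_desc; last exact: van.
    by rewrite (hg hsF ss' hx) lformBm -(proj2 (hfm s hs)).
  + rewrite hz; symmetry.
    have -> : up St (img p' t) = [set img p' s | s in up F t] by rewrite up_star.
    apply: oval_img.
    * by move=> s /hU.
    * exact: upF_fin.
    * by move=> s hs; rewrite pre_img //; case: (hU s hs).
    * move=> s hs; have [hsF ss'] := hU s hs; rewrite pre_img //.
      by rewrite lform_desc -?lformBm //; apply: van; left.
    * by move=> v; rewrite pre_img // lform_desc -?lformBm //; apply: van; right.
Qed.

Lemma divf_star :
  cones (divf St g) = [set img p' d | d in [set d | cones (divf F f) d /\ sg `<=` d]].
Proof.
apply/seteqP; split=> X.
- move=> [T [hc ho hfc]]; have [t [ht st eT]] := (conesSt T).1 hc.1.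
  rewrite eT in hc ho hfc.
  have [d [hd sd eX]] := face_lift hfc st.
  exists d => //; split=> //; exists t; split=> //.
    by apply/codim_star.
  by rewrite -ord_star.
- move=> [d [[t [hc ho hfc]] sd] <-].
  have st : sg `<=` t by apply: subset_trans sd (face_sub hfc).
  exists (img p' t); split.
  + by apply/codim_star => //; case: hc.
  + by rewrite ord_star //; case: hc.
  + exact: face_img.
Qed.

End P2a.

Section P2.
Variable R : realType.

Lemma fsum_sing (T : choiceType) (U : set T) (a : T) (G : T -> R) :
  U a -> (forall x, U x -> x = a) -> \sum_(x \in U) G x = G a.
Proof.
move=> ha hU; rewrite (_ : U = [set a]) ?fsbig_set1 //.
by apply/seteqP; split=> x //= hx; [apply: hU|rewrite hx].
Qed.

Lemma fsum_empty (T : choiceType) (U : set T) (G : T -> R) :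
  (forall x, ~ U x) -> \sum_(x \in U) G x = 0.
Proof.
move=> hU; rewrite (_ : U = set0) ?fsbig_set0 //.
by apply/seteqP; split=> x //= hx; exfalso; apply: (hU x).
Qed.

Lemma fsum_singz (T : choiceType) (U : set T) (a : T) (G : T -> int) :
  U a -> (forall x, U x -> x = a) -> \sum_(x \in U) G x = G a.
Proof.
move=> ha hU; rewrite (_ : U = [set a]) ?fsbig_set1 //.
by apply/seteqP; split=> x //= hx; [apply: hU|rewrite hx].
Qed.

Lemma fsum_emptyz (T : choiceType) (U : set T) (G : T -> int) :
  (forall x, ~ U x) -> \sum_(x \in U) G x = 0.
Proof.
move=> hU; rewrite (_ : U = set0) ?fsbig_set0 //.
by apply/seteqP; split=> x //= hx; exfalso; apply: (hU x).
Qed.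

Variable n : nat.

Lemma graph_in_gu (f : 'rV[R]_n -> R) C D : graph f C `<=` graph_up f D -> C `<=` D.
Proof.
move=> h x hx; have := h _ (graph_pt f hx).
by move=> [x' [t [hx' _ /eq_row_mx [-> _]]]].
Qed.

Lemma graph_sub_gu (f : 'rV[R]_n -> R) (C D : set 'rV[R]_n) : C `<=` D -> graph f C `<=` graph_up f D.
Proof. by move=> h y [x [hx ->]]; exists x, 0; split; [apply: h| |rewrite addr0]. Qed.

Lemma part2 (F : wfan R n) f d : tropical_fan F d -> meromorphic F f ->
  forall sigma, cones F sigma ->
     forall l : 'cV[R]_n, intmx l -> (forall x, sigma x -> f x = lform l x) ->
     forall k (p : 'M[R]_(n + 1, k)), qmap (graph f sigma) p ->
     forall k' (p' : 'M[R]_(n, k')), qmap sigma p' ->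
     forall g : 'rV[R]_k' -> R,
       (forall tau, cones F tau -> sigma `<=` tau ->
          forall x, tau x -> g (x *m p') = f x - lform l x) ->
     fan_iso (star (modif F f) (graph f sigma) p) (modif (star F sigma p') g).
Proof.
move=> [hF _ _] hf sg hsg l hl hfl k p hp k' p' hp' g hg.
have [ss [hss ess]] := fan_cone hF hsg.
have F0 : f 0 = 0 := f0 hF hf hsg.
have sg0 : sg 0 := cone_has0 hF hsg.
have g0 : g 0 = 0.
  by have := hg _ hsg (fun x h => h) 0 sg0; rewrite mul0mx F0 lform0 subrr.
have [Y [hY hYp]] := qmap_lift hp.
have [Y' [hY' hYp']] := qmap_lift hp'.
have hp'i : intmx p' by case: hp'.
have hpi : intmx p by case: hp.
pose M2 : 'M[R]_(n + 1, k' + 1) := block_mx p' (- l) 0 1%:M.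
have rowM2 : forall x (c : R), row_mx x c%:M *m M2 = row_mx (x *m p') (c - lform l x)%:M.
  move=> x c; rewrite mul_row_block mulmx0 addr0 mulmx1 mulmxN lformE.
  by rewrite raddfB /= addrC.
have hM2 : forall y, intmx y -> latt (graph f sg) y -> y *m M2 = 0.
  move=> y _; apply: latt_kill => z [x [hx ->]] _.
  by rewrite rowM2 (sg_kill hss ess hp' hx) hfl // subrr raddf0 row_mx0.
pose A := Y *m M2.
have hA : p *m A = M2 by apply: (qmap_desc hp hY hYp hM2).
pose E := row_mx 1%:M l *m p.
pose G := row_mx (0 : 'rV[R]_n) 1%:M *m p.
pose B : 'M[R]_(k' + 1, k) := col_mx (Y' *m E) G.
have hBA : B *m A = 1%:M.
  rewrite /B mul_col_mx /E /G -!mulmxA hA /M2 !mul_row_block.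
  rewrite !mulmx0 !mul0mx !addr0 !add0r !mul1mx !mulmx1 addNr mul_mx_row hYp' mulmx0.
  by rewrite -block_mxEv -scalar_mx_block.
have pkill : forall z, latt sg z -> row_mx z (z *m l) *m p = 0.
  move=> z; have -> : row_mx z (z *m l) = z *m row_mx 1%:M l by rewrite mul_mx_row mulmx1.
  rewrite -mulmxA; apply: latt_kill => x hx hix; rewrite mulmxA mul_mx_row mulmx1 lformE -hfl //.
  case: hp => _ _ hkk; apply/hkk.
    apply: intmx_row_mx => //; apply: intmx_scalar; rewrite hfl //; exact: lform_int.
  apply: latt_pt; first exact: graph_pt.
  apply: intmx_row_mx => //; apply: intmx_scalar; rewrite hfl //; exact: lform_int.
have hM2B : M2 *m B = p.
  apply: mx_eq_int => y hy.
  have hy1 : intmx (lsubmx y) by move=> i j; rewrite mxE; apply: hy.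
  set y1 := lsubmx y; set c := rsubmx y 0 0.
  have ey : y = row_mx y1 c%:M by rewrite -mx11_scalar hsubmxK.
  rewrite mulmxA {1}ey rowM2 /B mul_row_col /E /G !mulmxA mul_mx_row mulmx1.
  rewrite mul_scalar_mx scale_row_mx scaler0 scalemx1 -mulmxDl add_row_mx addr0.
  set u := y1 *m p' *m Y'.
  have -> : row_mx u (u *m l + (c - lform l y1)%:M)
      = row_mx (u - y1) ((u - y1) *m l) + row_mx y1 c%:M.
    rewrite add_row_mx subrK; congr row_mx.
    by rewrite mulmxBl [y1 *m l]lformE raddfB /= addrA addrAC.
  rewrite mulmxDl pkill ?add0r -?ey //.
  exact: (qmap_kerint hp' hY' hYp' hy1).
have hAB : A *m B = 1%:M.
  by rewrite -[LHS]mul1mx -[in LHS]hYp -mulmxA (mulmxA p) hA hM2B hYp.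
have imgA : forall T, img A (img p T) = img M2 T by move=> T; rewrite img_comp hA.
have M2g : forall t, cones F t -> sg `<=` t -> img M2 (graph f t) = graph g (img p' t).
  move=> t ht st; apply/seteqP; split=> y.
    move=> [z [x [hx ->]] <-]; exists (x *m p'); split; first by exists x.
    by rewrite rowM2 (hg _ ht st _ hx).
  move=> [y' [[x hx <-] ->]]; exists (row_mx x (f x)%:M); first exact: graph_pt.
  by rewrite rowM2 (hg _ ht st _ hx).
have M2gu : forall t, cones F t -> sg `<=` t -> img M2 (graph_up f t) = graph_up g (img p' t).
  move=> t ht st; apply/seteqP; split=> y.
    move=> [z [x [c [hx hc ->]]] <-]; exists (x *m p'), c; split=> //; first by exists x.
    by rewrite rowM2 (hg _ ht st _ hx) addrAC.
  move=> [y' [c [[x hx <-] hc ->]]]; exists (row_mx x (f x + c)%:M); first exact: gu_pt.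
  by rewrite rowM2 (hg _ ht st _ hx) addrAC.
have modif_case : forall T, cones (modif F f) T -> graph f sg `<=` T ->
    (exists t, [/\ cones F t, sg `<=` t & T = graph f t]) \/
    (exists t, [/\ cones (divf F f) t, sg `<=` t & T = graph_up f t]).
  move=> T [[t ht <-]|[t ht <-]] hsub.
    by left; exists t; split=> //; apply: graph_sub hsub.
  by right; exists t; split=> //; apply: graph_in_gu hsub.
have divS := divf_star hF hss ess hp' hY' hYp' hfl hl hg.
have imgp0 : forall t, t 0 -> img p' t 0 by move=> t h0; exists 0 => //; rewrite mul0mx.
have gu_graph : forall C D, C 0 -> graph g D <> graph_up g C.
  move=> C D h0 e; apply: (e_notin_graph (C := D) g0); rewrite e; exact: e_in_gu.
have M2inj : forall T T', cones (modif F f) T -> graph f sg `<=` T ->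
    cones (modif F f) T' -> graph f sg `<=` T' -> img M2 T = img M2 T' -> T = T'.
  move=> T T' hT sT hT' sT'.
  case: (modif_case T hT sT) => -[t [ht st ->]];
  case: (modif_case T' hT' sT') => -[t' [ht' st' ->]].
  - rewrite M2g // M2g // => /graph_inj /(img_inj hF ess hp' ht ht' st st') -> //.
  - have ht'F := divf_cones hF ht'.
    rewrite M2g // M2gu // => e; exfalso; apply: (gu_graph _ _ _ e).
    by apply: imgp0; apply: (cone_has0 hF ht'F).
  - have htF := divf_cones hF ht.
    rewrite M2gu // M2g // => e; exfalso; apply: (gu_graph _ _ _ (esym e)).
    by apply: imgp0; apply: (cone_has0 hF htF).
  - have htF := divf_cones hF ht; have ht'F := divf_cones hF ht'.
    by rewrite M2gu // M2gu // => /gu_inj /(img_inj hF ess hp' htF ht'F st st') ->.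
exists A, B; split.
- split; first by apply: intmx_mul => //; apply: intmx_block => //;
    [apply: intmxN|apply: intmx0|apply: intmx1].
  apply: intmx_col_mx.
    apply: intmx_mul => //; apply: intmx_mul => //; apply: intmx_row_mx => //; exact: intmx1.
  apply: intmx_mul => //; apply: intmx_row_mx; [exact: intmx0|exact: intmx1].
- exact: hAB.
- exact: hBA.
- have -> : cones (modif (star F sg p') g) = [set graph g s0 | s0 in cones (star F sg p')]
      `|` [set graph_up g s0 | s0 in cones (divf (star F sg p') g)] by [].
  rewrite divS; apply/seteqP; split=> X.
  + move=> [[s0 [t [ht st] <-] <-]|[dd [dd' [hdd sd] <-] <-]].
    * exists (img p (graph f t)); last by rewrite imgA M2g.
      exists (graph f t) => //; split; last exact: graph_mono.
      by left; exists t.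
    * have hddF := divf_cones hF hdd.
      exists (img p (graph_up f dd')); last by rewrite imgA M2gu.
      exists (graph_up f dd') => //; split; last exact: graph_sub_gu.
      by right; exists dd'.
  + move=> [C [T [hT sT] <-] <-]; rewrite imgA.
    case: (modif_case T hT sT) => -[t [ht st ->]].
    * by left; exists (img p' t); [exists t|rewrite M2g].
    * have htF := divf_cones hF ht.
      by right; exists (img p' t); [exists t|rewrite M2gu].
- move=> C [[T [hT sT] <-] _]; rewrite imgA /=.
  rewrite (@fsum_singz _ _ T); first last.
  + move=> T' [hT' sT' e]; apply: (M2inj _ _ hT' sT' hT sT).
    by rewrite -!imgA e.
  + by split.
  case: (modif_case T hT sT) => -[t [ht st ->]].
  + rewrite M2g //.
    rewrite (@fsum_singz _ _ (img p' t)); first last.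
    * by move=> X [[t' [ht' st'] <-] /graph_inj].
    * by split=> //; exists t.
    rewrite (@fsum_emptyz _ [set x | cones (divf (star F sg p') g) x /\ graph_up g x = graph g (img p' t)]); last first.
      move=> X [hX e]; move: hX; rewrite divS => -[dd [hdd sd] eX].
      apply: (gu_graph X (img p' t)) => //; rewrite -eX; apply: imgp0.
      exact: (cone_has0 hF (divf_cones hF hdd)).
    rewrite (@fsum_singz _ [set tau | [/\ cones F tau, sg `<=` tau & img p' tau = img p' t]] t); first last.
    * by move=> t' [ht' st' e]; apply: (img_inj hF ess hp' ht' ht st' st e).
    * by split.
    rewrite (@fsum_singz _ [set x | cones F x /\ graph f x = graph f t] t); first last.
    * by move=> t' [ht' /graph_inj].
    * by split.
    rewrite (@fsum_emptyz _ [set x | cones (divf F f) x /\ graph_up f x = graph f t]); last first.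
      move=> X [hX e]; apply: (e_notin_graph (C := t) F0); rewrite -e.
      by apply: e_in_gu => //; apply: (cone_has0 hF (divf_cones hF hX)).
    by rewrite !addr0.
  + have htF := divf_cones hF ht.
    rewrite M2gu //.
    rewrite (@fsum_emptyz _ [set x | cones (star F sg p') x /\ graph g x = graph_up g (img p' t)]); last first.
      move=> X [_ e]; apply: (gu_graph (img p' t) X) => //.
      by apply: imgp0; apply: (cone_has0 hF htF).
    rewrite (@fsum_singz _ [set x | cones (divf (star F sg p') g) x /\ graph_up g x = graph_up g (img p' t)] (img p' t)); first last.
    * by move=> X [_ /gu_inj].
    * by split=> //; rewrite divS; exists t.
    rewrite (@fsum_emptyz _ [set x | cones F x /\ graph f x = graph_up f t]); last first.
      move=> X [_ e]; apply: (e_notin_graph (C := X) F0); rewrite e.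
      by apply: e_in_gu => //; apply: (cone_has0 hF htF).
    rewrite (@fsum_singz _ [set x | cones (divf F f) x /\ graph_up f x = graph_up f t] t); first last.
    * by move=> t' [_ /gu_inj].
    * by split.
    by rewrite !add0r /= (ord_star hF ess hp' hY' hYp' hfl hl hg htF st).
Qed.

End P2.

Unset Implicit Arguments.

Theorem proposition2p3 (R : realType) (n d : nat) (F : wfan R n)
    (f : 'rV[R]_n -> R) :
  tropical_fan F d -> meromorphic F f ->
  (forall delta, cones (divf F f) delta ->
     forall k (p : 'M[R]_(n + 1, k)), qmap (graph_up f delta) p ->
     forall k' (p' : 'M[R]_(n, k')), qmap delta p' ->
     fan_iso (star (modif F f) (graph_up f delta) p) (star (divf F f) delta p'))
  /\
  (forall sigma, cones F sigma ->
     forall l : 'cV[R]_n, intmx l -> (forall x, sigma x -> f x = lform l x) ->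
     forall k (p : 'M[R]_(n + 1, k)), qmap (graph f sigma) p ->
     forall k' (p' : 'M[R]_(n, k')), qmap sigma p' ->
     forall g : 'rV[R]_k' -> R,
       (forall tau, cones F tau -> sigma `<=` tau ->
          forall x, tau x -> g (x *m p') = f x - lform l x) ->
     fan_iso (star (modif F f) (graph f sigma) p) (modif (star F sigma p') g)).
Proof.
move=> hF hf; split.
- by move=> delta hd k p hp k' p' hp'; apply: (part1 hF hf hd hp hp').
- move=> sigma hs l hl hfl k p hp k' p' hp' g hg.
  exact: (part2 hF hf hs hl hfl hp hp' hg).
Qed.
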